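(* Let $\mathcal A\in\mathbb Q^{n\times n\times n_3}$ with $\operatorname{Ind}_{QT}(\mathcal A)=k$, and let $\mathcal A^D\in\mathbb Q^{n\times n\times n_3}$ be its QT-Drazin inverse. Then $\mathtt{bcirc_z}(\mathcal A)^D=\mathtt{bcirc_z}(\mathcal A^D)$, where the left-hand side is the Drazin inverse of the quaternion matrix $\mathtt{bcirc_z}(\mathcal A)$.
   Context: $\mathbb Q$ denotes the real quaternions with the usual Hamilton multiplication; $\mathbb C$ is identified with $\{a_0+a_1\mathbf i\}$. Every quaternion array $A=A_0+A_1\mathbf i+A_2\mathbf j+A_3\mathbf k$ (real $A_t$) is written uniquely as $A=A_{\mathbf d}+\mathbf jA_{\mathbf c}$ with $A_{\mathbf d}=A_0+A_1\mathbf i$, $A_{\mathbf c}=A_2-A_3\mathbf i$. For $\mathcal A\in\mathbb Q^{n_1\times n_2\times n_3}$, $\mathcal A^{(s)}=\mathcal A(:,:,s)$. For a complex tensor $\mathcal C$, $\mathtt{bcirc}(\mathcal C)$ is the block circulant matrix with $(p,q)$ block $\mathcal C^{(((p-q)\bmod n_3)+1)}$. $P_{n_3}$ is the permutation matrix with first row $e_1^T$ and $r$-th row $e_{n_3+2-r}^T$ ($r\ge2$). $\mathtt{bcirc_z}(\mathcal A)=\mathtt{bcirc}(\mathcal A_{\mathbf d})+\mathbf j\,\mathtt{bcirc}(\mathcal A_{\mathbf c})(P_{n_3}\otimes I_{n_2})$. $\mathtt{unfold}(\mathcal B)=[\mathcal B^{(1)};\dots;\mathcal B^{(n_3)}]$,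 $\mathtt{fold}$ its inverse; QT-product $\mathcal A*_Q\mathcal B=\mathtt{fold}(\mathtt{bcirc_z}(\mathcal A)\mathtt{unfold}(\mathcal B))$; identity tensor $\mathcal I$: first frontal slice $I_n$, others zero; $\mathcal A^0=\mathcal I$, $\mathcal A^{k+1}=\mathcal A*_Q\mathcal A^k$. Conjugate transpose of a tensor: for complex $\mathcal C$, $\mathcal C^*$ has frontal slices $(\mathcal C^{(1)})^*$ and $(\mathcal C^{(n_3+2-s)})^*$ ($s\ge2$); $\mathcal A^*$ is defined by $\mathtt{unfold}(\mathcal A^* )=\mathtt{unfold}(\mathcal A_{\mathbf d}^* )-(P_{n_3}\otimes I_{n_2})\mathtt{unfold}(\mathcal A_{\mathbf c}^* )\mathbf j$; $\mathcal U$ is unitary if $\mathcal U^**_Q\mathcal U=\mathcal U*_Q\mathcal U^*=\mathcal I$. QT-rank: given a QT-SVD $\mathcal A=\mathcal U*_Q\mathcal S*_Q\mathcal V^*$ ($\mathcal U,\mathcal V$ unitary, every frontal slice of $\mathcal S$ diagonal), $\operatorname{rank}_{QT}(\mathcal A)=\#\{i\le\min(n_1,n_2):\|\mathcal S(i,i,:)\|_F>0\}$. QT-index $\operatorname{Ind}_{QT}(\mathcal A)$: least integer $k\ge0$ with $\operatorname{rank}_{QT}(\mathcal A^{k+1})=\operatorname{rank}_{QT}(\mathcal A^k)$. QT-Drazin inverse of $\mathcal A$ with $\operatorname{Ind}_{QT}(\mathcal A)=k$: a tensor $\mathcal X=\mathcal A^D$ with $\mathcal A^k*_Q\mathcal X*_Q\mathcal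 A=\mathcal A^k$, $\mathcal X*_Q\mathcal A*_Q\mathcal X=\mathcal X$, $\mathcal A*_Q\mathcal X=\mathcal X*_Q\mathcal A$. For a square quaternion matrix $M$, $\operatorname{Ind}(M)$ is the least $m\ge0$ with $\operatorname{rank}(M^{m+1})=\operatorname{rank}(M^m)$, and its Drazin inverse $M^D$ is the unique $X$ with $M^mXM=M^m$ ($m=\operatorname{Ind}(M)$), $XMX=X$, $MX=XM$. *)

(* Defs.v *)
From HB Require Import structures.
From mathcomp Require Import all_boot all_order all_algebra.
From mathcomp Require Import boolp reals.
From mathcomp Require Import ring.
From Stdlib Require Import ClassicalEpsilon.
Set Implicit Arguments. Unset Strict Implicit. Unset Printing Implicit Defensive.
Import Order.TTheory GRing.Theory Num.Theory.
Local Open Scope ring_scope.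

Section Quaternion.
Variable R : realType.

Record quat := Quat { q0 : R; q1 : R; q2 : R; q3 : R }.

Definition quat2tup (x : quat) := (q0 x, q1 x, q2 x, q3 x).
Definition tup2quat (t : R * R * R * R) := let: (a, b, c, d) := t in Quat a b c d.
Lemma quat2tupK : cancel quat2tup tup2quat. Proof. by case. Qed.
HB.instance Definition _ := Choice.copy quat (can_type quat2tupK).

Definition qzero := Quat 0 0 0 0.
Definition qopp x := Quat (- q0 x) (- q1 x) (- q2 x) (- q3 x).
Definition qadd x y := Quat (q0 x + q0 y) (q1 x + q1 y) (q2 x + q2 y) (q3 x + q3 y).

Definition qone := Quat 1 0 0 0.
(* Hamilton product: i^2 = j^2 = k^2 = ijk = -1 *)
Definition qmul x y := Quat
  (q0 x * q0 y - q1 x * q1 y - q2 x * q2 y - q3 x * q3 y)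
  (q0 x * q1 y + q1 x * q0 y + q2 x * q3 y - q3 x * q2 y)
  (q0 x * q2 y - q1 x * q3 y + q2 x * q0 y + q3 x * q1 y)
  (q0 x * q3 y + q1 x * q2 y - q2 x * q1 y + q3 x * q0 y).

Lemma qaddA : associative qadd.
Proof. by case=> ? ? ? ?; case=> ? ? ? ?; case=> ? ? ? ?; cbv [qadd qopp qzero qmul qone q0 q1 q2 q3]; congr Quat; ring. Qed.
Lemma qaddC : commutative qadd.
Proof. by case=> ? ? ? ?; case=> ? ? ? ?; cbv [qadd qopp qzero qmul qone q0 q1 q2 q3]; congr Quat; ring. Qed.
Lemma qadd0 : left_id qzero qadd.
Proof. by case=> ? ? ? ?; cbv [qadd qopp qzero qmul qone q0 q1 q2 q3]; congr Quat; ring. Qed.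
Lemma qaddN : left_inverse qzero qopp qadd.
Proof. by case=> ? ? ? ?; cbv [qadd qopp qzero qmul qone q0 q1 q2 q3]; congr Quat; ring. Qed.
HB.instance Definition _ := GRing.isZmodule.Build quat qaddA qaddC qadd0 qaddN.

Lemma qmulA : associative qmul.
Proof. by case=> ? ? ? ?; case=> ? ? ? ?; case=> ? ? ? ?; cbv [qadd qopp qzero qmul qone q0 q1 q2 q3]; congr Quat; ring. Qed.
Lemma qmul1 : left_id qone qmul.
Proof. by case=> ? ? ? ?; cbv [qadd qopp qzero qmul qone q0 q1 q2 q3]; congr Quat; ring. Qed.
Lemma qmulr1 : right_id qone qmul.
Proof. by case=> ? ? ? ?; cbv [qadd qopp qzero qmul qone q0 q1 q2 q3]; congr Quat; ring. Qed.
Lemma qmulDl : left_distributive qmul qadd.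
Proof. by case=> ? ? ? ?; case=> ? ? ? ?; case=> ? ? ? ?; cbv [qadd qopp qzero qmul qone q0 q1 q2 q3]; congr Quat; ring. Qed.
Lemma qmulDr : right_distributive qmul qadd.
Proof. by case=> ? ? ? ?; case=> ? ? ? ?; case=> ? ? ? ?; cbv [qadd qopp qzero qmul qone q0 q1 q2 q3]; congr Quat; ring. Qed.
Lemma qone_neq0 : qone != qzero.
Proof. by apply/eqP => -[] /eqP; rewrite oner_eq0. Qed.
HB.instance Definition _ :=
  GRing.Zmodule_isNzRing.Build quat qmulA qmul1 qmulr1 qmulDl qmulDr qone_neq0.

Definition qi : quat := Quat 0 1 0 0.
Definition qj : quat := Quat 0 0 1 0.
Definition qk : quat := Quat 0 0 0 1.
Definition qconj (x : quat) : quat := Quat (q0 x) (- q1 x) (- q2 x) (- q3 x).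
Definition qnorm2 (x : quat) : R := q0 x ^+ 2 + q1 x ^+ 2 + q2 x ^+ 2 + q3 x ^+ 2.
(* A = A_d + j A_c, with A_d = A0 + A1 i and A_c = A2 - A3 i (complex numbers
   a0 + a1 i are identified with the quaternions a0 + a1 i + 0 j + 0 k). *)
Definition qd (x : quat) : quat := Quat (q0 x) (q1 x) 0 0.
Definition qc (x : quat) : quat := Quat (q2 x) (- q3 x) 0 0.

Definition mget m n (M : 'M[quat]_(m, n)) (i j : nat) : quat :=
  match (insub i : option 'I_m), (insub j : option 'I_n) with
  | Some i', Some j' => M i' j'
  | _, _ => 0
  end.

Definition mctr m n (M : 'M[quat]_(m, n)) : 'M[quat]_(n, m) := map_mx qconj M^T.

Fixpoint mxpow N (M : 'M[quat]_N) (k : nat) : 'M[quat]_N :=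
  if k is k'.+1 then M *m mxpow M k' else 1%:M.

Definition col_indep m n (M : 'M[quat]_(m, n)) (S : {set 'I_n}) : Prop :=
  forall c : 'cV[quat]_n,
    (forall j, j \notin S -> c j ord0 = 0) -> M *m c = 0 -> c = 0.

Definition qrank m n (M : 'M[quat]_(m, n)) : nat :=
  \max_(S : {set 'I_n} | `[< col_indep M S >]) #|S|.

Definition is_mxInd N (M : 'M[quat]_N) (m : nat) : Prop :=
  qrank (mxpow M m.+1) = qrank (mxpow M m) /\
  (forall j, (j < m)%N -> qrank (mxpow M j.+1) <> qrank (mxpow M j)).

Definition is_mxDrazin N (M X : 'M[quat]_N) : Prop :=
  exists m, is_mxInd M m /\
    [/\ mxpow M m *m X *m M = mxpow M m, X *m M *m X = X & M *m X = X *m M].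

(* (slice index s : 'I_n3 is the 0-based version of the paper's s).   *)
Definition tensor (n1 n2 n3 : nat) := {ffun 'I_n3 -> 'M[quat]_(n1, n2)}.

Definition tmap n1 n2 n3 (f : quat -> quat) (A : tensor n1 n2 n3) : tensor n1 n2 n3 :=
  [ffun s => map_mx f (A s)].

Definition sliceN n1 n2 n3 (A : tensor n1 n2 n3) (s : nat) : 'M[quat]_(n1, n2) :=
  match (insub s : option 'I_n3) with Some s' => A s' | None => 0 end.

(* bcirc: block (p,q) (0-based) is the slice of index (p - q) mod n3 *)
Definition bcirc n1 n2 n3 (C : tensor n1 n2 n3) : 'M[quat]_(n3 * n1, n3 * n2) :=
  \matrix_(r, c) mget (sliceN C ((r %/ n1 + n3 - c %/ n2) %% n3)%N) (r %% n1)%N (c %% n2)%N.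

(* P_{n3} (x) I_{n2}; row a (0-based) of P_{n3} is e_{(n3 - a) mod n3} (0-based) *)
Definition permkron (n3 n2 : nat) : 'M[quat]_(n3 * n2) :=
  \matrix_(r, c) (((c %/ n2)%N == ((n3 - r %/ n2) %% n3)%N) && ((r %% n2)%N == (c %% n2)%N))%:R.

Definition bcircz n1 n2 n3 (A : tensor n1 n2 n3) : 'M[quat]_(n3 * n1, n3 * n2) :=
  bcirc (tmap qd A) + map_mx (fun x => qj * x) (bcirc (tmap qc A) *m permkron n3 n2).

Definition unfold n1 n2 n3 (B : tensor n1 n2 n3) : 'M[quat]_(n3 * n1, n2) :=
  \matrix_(r, c) mget (sliceN B (r %/ n1)%N) (r %% n1)%N c.

Definition fold n1 n2 n3 (M : 'M[quat]_(n3 * n1, n2)) : tensor n1 n2 n3 :=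
  [ffun s : 'I_n3 => \matrix_(i, j) mget M (s * n1 + i)%N j].

Definition qtprod n1 n2 n4 n3 (A : tensor n1 n2 n3) (B : tensor n2 n4 n3) :
  tensor n1 n4 n3 := fold (bcircz A *m unfold B).

Definition tid n n3 : tensor n n n3 := [ffun s : 'I_n3 => if val s == 0%N then 1%:M else 0].

Fixpoint qtpow n n3 (A : tensor n n n3) (k : nat) : tensor n n n3 :=
  if k is k'.+1 then qtprod A (qtpow A k') else tid n n3.

(* conjugate transpose of a complex tensor: slices (C^(1))^*, (C^(n3+2-s))^* *)
Definition ctrC n1 n2 n3 (C : tensor n1 n2 n3) : tensor n2 n1 n3 :=
  [ffun s : 'I_n3 => mctr (sliceN C ((n3 - s) %% n3)%N)].

Definition ctrT n1 n2 n3 (A : tensor n1 n2 n3) : tensor n2 n1 n3 :=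
  fold (unfold (ctrC (tmap qd A))
        - map_mx (fun x => x * qj) (permkron n3 n2 *m unfold (ctrC (tmap qc A)))).

Definition unitaryT n n3 (U : tensor n n n3) : Prop :=
  qtprod (ctrT U) U = tid n n3 /\ qtprod U (ctrT U) = tid n n3.

Definition fdiagT n1 n2 n3 (S : tensor n1 n2 n3) : Prop :=
  forall (s : 'I_n3) (i : 'I_n1) (j : 'I_n2), (i : nat) != j -> S s i j = 0.

Definition is_QTSVD n1 n2 n3 (A : tensor n1 n2 n3)
  (U : tensor n1 n1 n3) (S : tensor n1 n2 n3) (V : tensor n2 n2 n3) : Prop :=
  [/\ unitaryT U, unitaryT V, fdiagT S & A = qtprod (qtprod U S) (ctrT V)].

Definition tubeF n1 n2 n3 (S : tensor n1 n2 n3) (i : nat) : R :=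
  Num.sqrt (\sum_(s < n3) qnorm2 (mget (S s) i i)).

Definition svd_count n1 n2 n3 (S : tensor n1 n2 n3) : nat :=
  #|[pred i : 'I_(minn n1 n2) | 0 < tubeF S i]|.

Definition rankQT n1 n2 n3 (A : tensor n1 n2 n3) : nat :=
  epsilon (inhabits 0%N)
    (fun r => exists U S V, is_QTSVD A U S V /\ svd_count S = r).

Definition is_IndQT n n3 (A : tensor n n n3) (k : nat) : Prop :=
  rankQT (qtpow A k.+1) = rankQT (qtpow A k) /\
  (forall j, (j < k)%N -> rankQT (qtpow A j.+1) <> rankQT (qtpow A j)).

Definition is_QTDrazin n n3 (A X : tensor n n n3) (k : nat) : Prop :=
  [/\ qtprod (qtprod (qtpow A k) X) A = qtpow A k,
      qtprod (qtprod X A) X = X &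
      qtprod A X = qtprod X A].

End Quaternion.

(* Main.v *)
Require Import Defs.
From HB Require Import structures.
From mathcomp Require Import all_boot all_order all_algebra.
From mathcomp Require Import boolp reals ring zify.
From Stdlib Require Import Classical.
Set Implicit Arguments. Unset Strict Implicit. Unset Printing Implicit Defensive.
Import Order.TTheory GRing.Theory Num.Theory.
Local Open Scope ring_scope.

Section QLA.
Variable R : realType.
Local Notation H := (quat R).

Lemma qmulE (x y : H) : x * y = qmul x y. Proof. by []. Qed.
Lemma qaddE (x y : H) : x + y = qadd x y. Proof. by []. Qed.
Lemma qoppE (x : H) : - x = qopp x. Proof. by []. Qed.
Lemma q0E : (0 : H) = qzero R. Proof. by []. Qed.
Lemma q1E : (1 : H) = qone R. Proof. by []. Qed.

Definition qinv (x : H) : H := let r := (qnorm2 x)^-1 in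
  Quat (q0 x * r) (- q1 x * r) (- q2 x * r) (- q3 x * r).

Lemma qnorm2_neq0 (x : H) : x != 0 -> qnorm2 x != 0.
Proof.
case: x => a b c d; rewrite /qnorm2 /=; apply: contraNN => h.
move: h; rewrite !paddr_eq0 ?addr_ge0 ?sqr_ge0 // !sqrf_eq0.
by case/andP => /andP[] /andP[] /eqP-> /eqP-> /eqP-> /eqP->.
Qed.

Lemma qmulV (x : H) : x != 0 -> x * qinv x = 1.
Proof.
move=> /qnorm2_neq0; case: x => a b c d; rewrite /qnorm2 /= => nz.
rewrite qmulE q1E /qmul /qinv /qone /qnorm2 /=; congr Quat; field; exact: nz.
Qed.

Lemma qmulVl (x : H) : x != 0 -> qinv x * x = 1.
Proof.
move=> /qnorm2_neq0; case: x => a b c d; rewrite /qnorm2 /= => nz.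
rewrite qmulE q1E /qmul /qinv /qone /qnorm2 /=; congr Quat; field; exact: nz.
Qed.


Definition supp n (c : 'cV[H]_n) (S : {set 'I_n}) := forall j, j \notin S -> c j ord0 = 0.

Lemma homog_gen k : forall t m (E : 'M[H]_(m, k)) (Rw : {set 'I_m}) (S : {set 'I_k}),
  #|Rw| = t -> (t < #|S|)%N ->
  exists c : 'cV[H]_k, [/\ c != 0, supp c S & forall i, i \in Rw -> (E *m c) i ord0 = 0].
Proof.
elim=> [|t IH] m E Rw S cR ltS.
- have [j jS] : exists j, j \in S by apply/set0Pn; rewrite -card_gt0.
  exists (delta_mx j ord0); split.
  + apply/negP => /eqP/matrixP/(_ j ord0); rewrite !mxE !eqxx /= => /eqP.
    by rewrite oner_eq0.
  + move=> j' j'S; rewrite mxE; case: eqP => // ej; move: j'S; by rewrite ej jS.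
  + by move=> i; move/card0_eq: cR => ->.
- have [i0 i0R] : exists i0, i0 \in Rw by apply/set0Pn; rewrite -card_gt0 cR.
  have cR' : #|Rw :\ i0| = t by move: cR; rewrite (cardsD1 i0) i0R => -[].
  case: (pickP (fun j => (j \in S) && (E i0 j != 0))) => [j /andP[jS Ej] | none].
  + set a := qinv (E i0 j).
    pose P : 'M[H]_k := 1%:M - \matrix_(x, l) (if x == j then a * E i0 l else 0).
    have cS' : (t < #|S :\ j|)%N by move: ltS; rewrite (cardsD1 j S) jS.
    have [c' [c'nz c'S Ec']] := IH _ (E *m P) _ _ cR' cS'.
    exists (P *m c').
    have Pc x : x != j -> (P *m c') x ord0 = c' x ord0.
      move=> xj; rewrite mulmxBl mul1mx !mxE big1 ?subr0 // => y _.
      by rewrite mxE (negbTE xj) mul0r.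
    split.
    * apply: contra c'nz => /eqP Pc0; apply/eqP/matrixP => x y; rewrite (ord1 y) mxE.
      case: (eqVneq x j) => [->|xj]; first by apply: c'S; rewrite !inE eqxx.
      by rewrite -Pc // Pc0 mxE.
    * move=> x xS; have xj : x != j by apply: contraNneq xS => ->.
      by rewrite Pc // c'S // !inE negb_and xS orbT.
    * move=> i iR; rewrite mulmxA.
      case: (eqVneq i i0) => [->|ii0]; last by apply: Ec'; rewrite !inE ii0 iR.
      rewrite !mxE big1 // => l _.
      have -> : (E *m P) i0 l = 0.
        rewrite mulmxBr mulmx1 !mxE (bigD1 j) //= big1 => [|x xj]; last first.
          by rewrite mxE (negbTE xj) mulr0.
        by rewrite mxE eqxx addr0 mulrA /a qmulV // mul1r subrr.
      by rewrite mul0r.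
  + have cS' : (t < #|S|)%N by apply: ltnW.
    have [c [cnz cS Ec]] := IH _ E _ _ cR' cS'.
    exists c; split => // i iR.
    case: (eqVneq i i0) => [->|ii0]; last by apply: Ec; rewrite !inE ii0 iR.
    rewrite !mxE big1 // => l _.
    case: (boolP (l \in S)) => lS; last by rewrite cS // mulr0.
    by move: (none l); rewrite lS /= => /negbFE/eqP ->; rewrite mul0r.
Qed.

Lemma col_indep0 m p (A : 'M[H]_(m, p)) : col_indep A set0.
Proof. by move=> c cS _; apply/matrixP => i j; rewrite (ord1 j) cS ?inE // mxE. Qed.

Lemma qrank_ge m p (A : 'M[H]_(m, p)) S : col_indep A S -> (#|S| <= qrank A)%N.
Proof.
move=> h; exact: (@leq_bigmax_cond _ (fun S => `[< col_indep A S >]) (fun S => #|S|) S (asboolT h)).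
Qed.

Lemma qrank_wit m p (A : 'M[H]_(m, p)) : exists2 T, col_indep A T & #|T| = qrank A.
Proof.
have h0 : `[< col_indep A set0 >] by apply: asboolT; exact: col_indep0.
case: (@arg_maxnP _ set0 (fun S => `[< col_indep A S >]) (fun S : {set 'I_p} => #|S|) h0) => T /asboolP hT maxT.
exists T => //; apply/eqP; rewrite eqn_leq qrank_ge //=.
by apply/bigmax_leqP => S /maxT.
Qed.

Lemma span_max m p (A : 'M[H]_(m, p)) T : col_indep A T -> #|T| = qrank A ->
  forall l, exists d : 'cV[H]_p, supp d T /\ A *m d = col l A.
Proof.
move=> indT cT l.
case: (boolP (l \in T)) => lT.
  exists (delta_mx l ord0); split; last by rewrite colE.
  by move=> j jT; rewrite mxE; case: eqP => // ej; move: jT; rewrite ej lT.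
apply: NNPP => nod.
have : col_indep A (l |: T).
  move=> c cS Ac.
  case: (eqVneq (c l ord0) 0) => cl0.
    apply: indT => // j jT; case: (eqVneq j l) => [->//|jl].
    by apply: cS; rewrite !inE negb_or jl jT.
  exfalso; apply: nod.
  exists (\col_x (if x == l then 0 else - (c x ord0 * qinv (c l ord0)))); split.
    move=> x xT; rewrite mxE; case: eqP => // /eqP xl.
    by rewrite cS ?mul0r ?oppr0 // !inE negb_or xl xT.
  apply/matrixP => i y; rewrite (ord1 y) !mxE.
  have : (A *m c) i ord0 = 0 by rewrite Ac mxE.
  rewrite mxE (bigD1 l) //= => /eqP; rewrite addrC addr_eq0 => /eqP e.
  rewrite (bigD1 l) //= mxE eqxx mulr0 add0r.
  under eq_bigr => x xl do rewrite mxE (negbTE xl) mulrN mulrA.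
  by rewrite sumrN -mulr_suml e mulNr opprK -mulrA qmulV // mulr1.
move=> /qrank_ge; rewrite cardsU1 lT cT add1n ltnn //.
Qed.

Lemma qrank_mulmx m p q (A : 'M[H]_(m, p)) (C : 'M[H]_(p, q)) S :
  col_indep (A *m C) S -> (#|S| <= qrank A)%N.
Proof.
move=> indS.
have [T indT cT] := qrank_wit A.
have /choice [f Hf] := span_max indT cT.
pose D : 'M[H]_p := \matrix_(i, l) f l i ord0.
have AD : A *m D = A.
  apply/matrixP => i l; have := congr1 (fun M : 'M[H]_(m, 1) => M i ord0) (proj2 (Hf l)).
  by rewrite !mxE => <-; apply: eq_bigr => x _; rewrite mxE.
rewrite -cT leqNgt; apply/negP => ltTS.
have [c [cnz cS Ec]] := @homog_gen _ _ _ (D *m C) T S (erefl _) ltTS.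
have DCc : D *m C *m c = 0.
  apply/matrixP => i y; rewrite (ord1 y) [RHS]mxE.
  case: (boolP (i \in T)) => iT; first exact: Ec.
  by rewrite -mulmxA mxE big1 // => x _; rewrite mxE (proj1 (Hf x) i iT) mul0r.
have : A *m C *m c = 0.
  have -> : A *m C *m c = A *m (D *m C *m c) by rewrite !mulmxA AD.
  by rewrite DCc mulmx0.
by move/(indS c cS) => c0; rewrite c0 eqxx in cnz.
Qed.

Lemma qrank_mul_le m p q (A : 'M[H]_(m, p)) (C : 'M[H]_(p, q)) :
  (qrank (A *m C) <= qrank A)%N.
Proof. by have [T iT <-] := qrank_wit (A *m C); exact: qrank_mulmx iT. Qed.

Lemma qrank_eq_span m N (A : 'M[H]_(m, N)) (M : 'M[H]_N) :
  qrank (A *m M) = qrank A -> exists Y : 'M[H]_N, A = A *m M *m Y.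
Proof.
move=> eqr; set B := A *m M.
have [T indT cT] := qrank_wit B.
have hl : forall l, exists d : 'cV[H]_N, B *m d = col l A.
  move=> l; apply: NNPP => nod.
  pose B' := row_mx B (col l A).
  pose S' := rshift N (ord0 : 'I_1) |: [set lshift 1 x | x in T].
  have B'E : B' = A *m row_mx M (delta_mx l ord0) by rewrite mul_mx_row -colE.
  have : col_indep B' S'.
    move=> c cS Bc.
    set c1 : 'cV_N := usubmx c; set c2 : 'cV_1 := dsubmx c.
    have cE : c = col_mx c1 c2 by rewrite vsubmxK.
    have : B *m c1 + col l A *m c2 = 0 by rewrite -mul_row_col -cE.
    case: (eqVneq (c2 ord0 ord0) 0) => c20.
      have c2z : c2 = 0 by apply/matrixP => i j; rewrite (ord1 i) (ord1 j) c20 mxE.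
      rewrite c2z mulmx0 addr0 => Bc1.
      have c1z : c1 = 0.
        apply: indT Bc1 => x xT; rewrite mxE; apply: cS.
        rewrite !inE negb_or eq_lrshift /=; apply/imsetP => -[y yT /lshift_inj exy].
        by move: xT; rewrite exy yT.
      by rewrite cE c1z c2z col_mx0.
    move=> e; exfalso; apply: nod.
    exists (- (c1 *m (qinv (c2 ord0 ord0))%:M)).
    apply/matrixP => i y; rewrite (ord1 y).
    have e' : (B *m c1) i ord0 = - (A i l * c2 ord0 ord0).
      apply/eqP; rewrite -addr_eq0; apply/eqP.
      move: (congr1 (fun X : 'M[H]_(m, 1) => X i ord0) e).
      by rewrite mxE [X in _ + X = _]mxE big_ord1 [col _ _ _ _]mxE [RHS]mxE.
    rewrite mulmxN mulmxA mxE [X in - X]mxE big_ord1 e' !mxE mulr1n.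
    rewrite mulNr opprK -mulrA qmulV; first exact: mulr1. by move: c20; rewrite /c2 mxE.
  rewrite B'E => /qrank_mulmx; rewrite -eqr -cT cardsU1 card_imset; last exact: lshift_inj.
  have -> : rshift N (ord0 : 'I_1) \notin [set lshift 1 x | x in T].
    by apply/imsetP => -[y _ /eqP]; rewrite eq_rlshift.
  by rewrite add1n ltnn.
have /choice [f Hf] := hl.
exists (\matrix_(i, l) f l i ord0); apply/matrixP => i l.
have := congr1 (fun X : 'M[H]_(m, 1) => X i ord0) (Hf l).
by rewrite !mxE => <-; apply: eq_bigr => x _; rewrite [X in _ = _ * X]mxE.
Qed.

Lemma mxpowS N (M : 'M[H]_N) j : mxpow M j.+1 = mxpow M j *m M.
Proof.
elim: j => [|j IH]; first by rewrite /= mulmx1 mul1mx.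
by rewrite [LHS]/= -[M *m mxpow M j]/(mxpow M j.+1) {1}IH mulmxA.
Qed.

Lemma mxpowD N (M : 'M[H]_N) a b : mxpow M (a + b) = mxpow M a *m mxpow M b.
Proof. by elim: a => [|a IH]; rewrite /= ?mul1mx // IH mulmxA. Qed.

Lemma mxpow_comm N (M X : 'M[H]_N) j : X *m M = M *m X ->
  X *m mxpow M j = mxpow M j *m X.
Proof.
move=> c; elim: j => [|j IH]; first by rewrite /= mulmx1 mul1mx.
by rewrite /= mulmxA c -mulmxA IH mulmxA.
Qed.

Lemma drazin_from N (M X : 'M[H]_N) k :
  mxpow M k *m X *m M = mxpow M k -> X *m M *m X = X -> M *m X = X *m M ->
  is_mxDrazin M X.
Proof.
move=> e1 e2 e3.
have cX j : X *m mxpow M j = mxpow M j *m X by apply: mxpow_comm.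
have cM j : M *m mxpow M j = mxpow M j *m M by rewrite -mxpowS.
have Pk : qrank (mxpow M k.+1) == qrank (mxpow M k).
  rewrite eqn_leq {1}mxpowS qrank_mul_le /=.
  have h : mxpow M k = mxpow M k.+1 *m X.
    by rewrite mxpowS -mulmxA e3 mulmxA e1.
  rewrite {1}h; exact: qrank_mul_le.
have exP : exists j, qrank (mxpow M j.+1) == qrank (mxpow M j) by exists k.
case: (ex_minnP exP) => m Pm minm.
exists m; split.
  split; first exact/eqP.
  by move=> j jm /eqP Pj; have := minm j Pj; rewrite leqNgt jm.
have [Y eY] : exists Y : 'M[H]_N, mxpow M m = mxpow M m *m M *m Y.
  by apply: qrank_eq_span; rewrite -mxpowS; apply/eqP.
have key j : mxpow M m = mxpow M (m + j) *m mxpow Y j.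
  elim: j => [|j IH]; first by rewrite addn0 /= mulmx1.
  have h : mxpow M (m + j) = mxpow M (m + j.+1) *m Y.
    by rewrite addnC mxpowD {1}eY !mulmxA -mxpowD -mxpowS addnS addnC.
  by rewrite {1}IH h -mulmxA.
split => //.
have -> : mxpow M m *m X *m M = X *m M *m mxpow M m.
  by rewrite -cX -!mulmxA cM.
have h2 : X *m M *m mxpow M (m + k) = mxpow M (m + k).
  rewrite -mulmxA cM mulmxA cX mxpowD -!mulmxA (mulmxA (mxpow M k)).
  by rewrite e1.
by rewrite {1}(key k) mulmxA h2 -key.
Qed.

End QLA.

Lemma sum_shift1 (V : zmodType) (N : nat) (G : int -> V) :
  (forall u, G (u + N%:Z) = G u) ->
  \sum_(s < N) G (s%:Z + 1) = \sum_(s < N) G s%:Z.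
Proof.
case: N => [|N] perG; first by rewrite !big_ord0.
rewrite big_ord_recr big_ord_recl /= addrC; congr (_ + _).
  by rewrite -(perG 0) add0r; congr G; lia.
by apply: eq_bigr => s _; congr G; rewrite /bump /=; lia.
Qed.

Lemma sum_shift (V : zmodType) (N : nat) (F : int -> V) :
  (forall u, F (u + N%:Z) = F u) ->
  forall z, \sum_(s < N) F (s%:Z + z) = \sum_(s < N) F s%:Z.
Proof.
move=> per.
have natc : forall (G : int -> V), (forall u, G (u + N%:Z) = G u) ->
    forall w : nat, \sum_(s < N) G (s%:Z + w%:Z) = \sum_(s < N) G s%:Z.
  move=> G perG; elim=> [|w IH]; first by apply: eq_bigr => s _; rewrite addr0.
  rewrite -IH -(sum_shift1 (G := fun u => G (u + w%:Z))); last first.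
    by move=> u; rewrite -[RHS]perG; congr G; lia.
  by apply: eq_bigr => s _; congr G; lia.
case=> w; first exact: natc.
have perG : forall u, F (u + N%:Z + Negz w) = F (u + Negz w).
  by move=> u; rewrite -[RHS]per; congr F; lia.
rewrite -(natc (fun u => F (u + Negz w)) perG w.+1).
by apply: eq_bigr => s _; congr F; lia.
Qed.

Section Alg.
Variable R : realType.
Local Notation H := (quat R).
Local Notation J := (qj R).


Lemma qdD (x y : H) : qd (x + y) = qd x + qd y.
Proof. by case: x => ? ? ? ?; case: y => ? ? ? ?; rewrite !qaddE /qadd /qd /=; congr Quat; ring. Qed.
Lemma qcD (x y : H) : qc (x + y) = qc x + qc y.
Proof.
case: x => ? ? ? ?; case: y => ? ? ? ?; rewrite !qaddE /qadd /qc /=.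
by congr Quat; ring.
Qed.

Lemma qI1 (x y z : H) : qd ((qd x + J * qc y) * z) = qd x * qd z + J * qc y * (J * qc z).
Proof.
case: x => ? ? ? ?; case: y => ? ? ? ?; case: z => ? ? ? ?.
rewrite !qmulE !qaddE /qmul /qadd /qd /qc /qj /=; congr Quat; ring.
Qed.

Lemma qI2 (x y z : H) : J * qc ((qd x + J * qc y) * z) = qd x * (J * qc z) + J * qc y * qd z.
Proof.
case: x => ? ? ? ?; case: y => ? ? ? ?; case: z => ? ? ? ?.
rewrite !qmulE !qaddE /qmul /qadd /qd /qc /qj /=; congr Quat; ring.
Qed.

Lemma qd_sum m (F : 'I_m -> H) : qd (\sum_(i < m) F i) = \sum_(i < m) qd (F i).
Proof. by elim/big_rec2: _ => // i y1 y2 _ <-; rewrite qdD. Qed.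
Lemma qc_sum m (F : 'I_m -> H) : qc (\sum_(i < m) F i) = \sum_(i < m) qc (F i).
Proof.
elim/big_rec2: _ => [|i y1 y2 _ <-]; last by rewrite qcD.
by rewrite /qc /= oppr0.
Qed.


Lemma add4 (V : zmodType) (a b c d : V) : (a + d) + (b + c) = (a + c) + (b + d).
Proof. by rewrite addrACA [RHS]addrACA [d + c]addrC. Qed.

Lemma circ_alg (N M : nat) (a b : int -> nat -> H) (p q : int) :
  (forall t l, a (t + N%:Z) l = a t l) -> (forall t l, b (t + N%:Z) l = b t l) ->
  qd (\sum_(s < N) \sum_(l < M) (qd (a (p - q - s%:Z) l) + J * qc (a (p - q + s%:Z) l)) * b s%:Z l)
  + J * qc (\sum_(s < N) \sum_(l < M) (qd (a (p + q - s%:Z) l) + J * qc (a (p + q + s%:Z) l)) * b s%:Z l)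
  = \sum_(s < N) \sum_(l < M) (qd (a (p - s%:Z) l) + J * qc (a (p + s%:Z) l)) *
        (qd (b (s%:Z - q) l) + J * qc (b (s%:Z + q) l)).
Proof.
move=> pa pb.
have paN t l : a (t - N%:Z) l = a t l by rewrite -(pa (t - N%:Z)) subrK.
pose F1 u := \sum_(l < M) qd (a (p - q - u) l) * qd (b u l).
pose F2 u := \sum_(l < M) qd (a (p + q - u) l) * (J * qc (b u l)).
pose F3 u := \sum_(l < M) J * qc (a (p + q + u) l) * qd (b u l).
pose F4 u := \sum_(l < M) J * qc (a (p - q + u) l) * (J * qc (b u l)).
have per13 u : F1 (u + N%:Z) + F3 (u + N%:Z) = F1 u + F3 u.
  congr (_ + _); apply: eq_bigr => l _; rewrite pb.
    rewrite (_ : p - q - (u + N%:Z) = p - q - u - N%:Z); [by rewrite paN | lia].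
  rewrite (_ : p + q + (u + N%:Z) = p + q + u + N%:Z); [by rewrite pa | lia].
have per24 u : F2 (u + N%:Z) + F4 (u + N%:Z) = F2 u + F4 u.
  congr (_ + _); apply: eq_bigr => l _; rewrite pb.
    rewrite (_ : p + q - (u + N%:Z) = p + q - u - N%:Z); [by rewrite paN | lia].
  rewrite (_ : p - q + (u + N%:Z) = p - q + u + N%:Z); [by rewrite pa | lia].
have L1 : qd (\sum_(s < N) \sum_(l < M) (qd (a (p - q - s%:Z) l) + J * qc (a (p - q + s%:Z) l)) * b s%:Z l)
   = \sum_(s < N) (F1 s%:Z + F4 s%:Z).
  rewrite qd_sum; apply: eq_bigr => s _; rewrite qd_sum -big_split; apply: eq_bigr => l _.
  exact: qI1.
have L2 : J * qc (\sum_(s < N) \sum_(l < M) (qd (a (p + q - s%:Z) l) + J * qc (a (p + q + s%:Z) l)) * b s%:Z l)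
   = \sum_(s < N) (F2 s%:Z + F3 s%:Z).
  rewrite qc_sum mulr_sumr; apply: eq_bigr => s _; rewrite qc_sum mulr_sumr -big_split.
  apply: eq_bigr => l _; exact: qI2.
rewrite L1 L2.
have -> : \sum_(s < N) \sum_(l < M) (qd (a (p - s%:Z) l) + J * qc (a (p + s%:Z) l)) *
        (qd (b (s%:Z - q) l) + J * qc (b (s%:Z + q) l)) =
   \sum_(s < N) ((F1 (s%:Z + - q) + F3 (s%:Z + - q)) + (F2 (s%:Z + q) + F4 (s%:Z + q))).
  apply: eq_bigr => s _; rewrite /F1 /F2 /F3 /F4 -!big_split; apply: eq_bigr => l _ /=.
  have e1 : p - q - (s%:Z + - q) = p - s%:Z by lia.
  have e2 : p + q + (s%:Z + - q) = p + s%:Z by lia.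
  have e3 : p + q - (s%:Z + q) = p - s%:Z by lia.
  have e4 : p - q + (s%:Z + q) = p + s%:Z by lia.
  by rewrite e1 e2 e3 e4 mulrDl !mulrDr addrACA.
have S13 : \sum_(s < N) (F1 (s%:Z + - q) + F3 (s%:Z + - q)) = \sum_(s < N) (F1 s%:Z + F3 s%:Z)
  := @sum_shift _ N (fun u => F1 u + F3 u) per13 (- q).
have S24 : \sum_(s < N) (F2 (s%:Z + q) + F4 (s%:Z + q)) = \sum_(s < N) (F2 s%:Z + F4 s%:Z)
  := @sum_shift _ N (fun u => F2 u + F4 u) per24 q.
rewrite [RHS]big_split /= S13 S24.
by rewrite !big_split /= add4.
Qed.

End Alg.

Section Circ.
Variable R : realType.
Local Notation H := (quat R).

Lemma mgetE a b (M : 'M[H]_(a, b)) (i : 'I_a) (j : 'I_b) : mget M i j = M i j.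
Proof. by rewrite /mget !valK. Qed.

Lemma mgetE' a b (M : 'M[H]_(a, b)) i j (hi : (i < a)%N) (hj : (j < b)%N) :
  mget M i j = M (Ordinal hi) (Ordinal hj).
Proof. by rewrite -mgetE. Qed.

Lemma mget_map a b (f : H -> H) (M : 'M[H]_(a, b)) i j : f 0 = 0 ->
  mget (map_mx f M) i j = f (mget M i j).
Proof.
move=> f0; rewrite /mget.
by case: (insub i : option 'I_a) => [i'|]; case: (insub j : option 'I_b) => [j'|] //; rewrite mxE.
Qed.

Variables (n n3 : nat).
Local Notation T := (tensor R n n n3).

Lemma sliceN_map (f : H -> H) (A : T) s : f 0 = 0 ->
  sliceN (tmap f A) s = map_mx f (sliceN A s).
Proof.
move=> f0; rewrite /sliceN /tmap; case: (insub s : option 'I_n3) => [s'|]; first by rewrite ffunE.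
by apply/matrixP => i j; rewrite !mxE f0.
Qed.

Definition tget (A : T) (t : int) (i j : nat) : H := mget (sliceN A `|(t %% n3)%Z|%N) i j.

Lemma tget_map (f : H -> H) (A : T) t i j : f 0 = 0 ->
  tget (tmap f A) t i j = f (tget A t i j).
Proof. by move=> f0; rewrite /tget sliceN_map // mget_map. Qed.

Lemma tget_per (A : T) t i j : tget A (t + n3%:Z) i j = tget A t i j.
Proof. by rewrite /tget modzDr. Qed.

Lemma tget_perN (A : T) t i j : tget A (t - n3%:Z) i j = tget A t i j.
Proof. by rewrite -(tget_per A (t - n3%:Z)) subrK. Qed.

Lemma tget_mod (A : T) t u i j : tget A ((t %% n3)%Z + u) i j = tget A (t + u) i j.
Proof. by rewrite /tget modzDml. Qed.

Lemma tget_nat (A : T) (s : nat) i j : (s < n3)%N -> tget A s i j = mget (sliceN A s) i j.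
Proof. by move=> sn; rewrite /tget modz_nat modn_small. Qed.


Lemma blk_lt s l : (s < n3)%N -> (l < n)%N -> (s * n + l < n3 * n)%N.
Proof. move=> sn ln; nia. Qed.

Lemma blk_div s l : (l < n)%N -> ((s * n + l) %/ n = s)%N.
Proof. by move=> ln; rewrite divnMDl ?divn_small ?addn0 //; apply: leq_ltn_trans ln. Qed.

Lemma blk_mod s l : (l < n)%N -> ((s * n + l) %% n = l)%N.
Proof. by move=> ln; rewrite modnMDl modn_small. Qed.

Lemma negmod b : (b < n3)%N -> ((n3 - b) %% n3 = if b == 0 then 0 else n3 - b)%N.
Proof.
case: b => [|b] bn; first by rewrite subn0 modnn.
by rewrite modn_small //; lia.
Qed.

Lemma negmod_sym a b : (a < n3)%N -> (b < n3)%N ->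
  (a == (n3 - b) %% n3)%N = (b == (n3 - a) %% n3)%N.
Proof.
move=> an bn; rewrite !negmod //.
by case: a an => [|a] an; case: b bn => [|b] bn /=; lia.
Qed.

Lemma bcirc_blk (C : T) p s i l : (p < n3)%N -> (s < n3)%N -> (i < n)%N -> (l < n)%N ->
  mget (bcirc C) (p * n + i) (s * n + l) = tget C (p%:Z - s%:Z) i l.
Proof.
move=> pn sn ib lb.
rewrite (mgetE' _ (blk_lt pn ib) (blk_lt sn lb)) mxE /= !blk_div // !blk_mod //.
rewrite -(tget_per C) /tget.
have -> : p%:Z - s%:Z + n3%:Z = ((p + n3 - s)%N : int) by lia.
by rewrite modz_nat.
Qed.

Lemma mgetD a b (X Y : 'M[H]_(a, b)) i j : mget (X + Y) i j = mget X i j + mget Y i j.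
Proof.
rewrite /mget.
by case: (insub i : option 'I_a) => [i'|]; case: (insub j : option 'I_b) => [j'|]; rewrite ?mxE ?addr0.
Qed.

Lemma mul_permkron m (X : 'M[H]_(m, n3 * n)) r p j : (r < m)%N -> (p < n3)%N -> (j < n)%N ->
  mget (X *m permkron R n3 n) r (p * n + j) = mget X r (((n3 - p) %% n3) * n + j).
Proof.
move=> rm pn jn.
have pn' : ((n3 - p) %% n3 < n3)%N by rewrite ltn_mod; lia.
rewrite (mgetE' _ rm (blk_lt pn jn)) (mgetE' _ rm (blk_lt pn' jn)) mxE.
rewrite (bigD1 (Ordinal (blk_lt pn' jn))) //= big1 ?addr0.
  rewrite mxE /= !blk_div // !blk_mod // eqxx andbT negmod_sym // eqxx.
  by rewrite mulr1.
move=> x /eqP xne; rewrite mxE /= !blk_div // !blk_mod //.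
case: (boolP ((p == (n3 - x %/ n) %% n3)%N && (x %% n == j)%N)) => [/andP[e1 e2]|]; last first.
  by move=> _; rewrite mulr0.
exfalso; apply: xne; apply: val_inj => /=.
have xn : (x %/ n < n3)%N by rewrite ltn_divLR; [exact: ltn_ord | lia].
move: e1; rewrite negmod_sym // => /eqP <-.
by rewrite -(eqP e2) -divn_eq.
Qed.


Lemma qd0 : qd (0 : H) = 0. Proof. by []. Qed.
Lemma qc0 : qc (0 : H) = 0. Proof. by rewrite /qc /= oppr0. Qed.

Lemma bcircz_blk (A : T) p s i l : (p < n3)%N -> (s < n3)%N -> (i < n)%N -> (l < n)%N ->
  mget (bcircz A) (p * n + i) (s * n + l) =
  qd (tget A (p%:Z - s%:Z) i l) + qj R * qc (tget A (p%:Z + s%:Z) i l).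
Proof.
move=> pn sn ib lb.
rewrite /bcircz mgetD mget_map ?mulr0 // mul_permkron ?blk_lt //.
have sn' : ((n3 - s) %% n3 < n3)%N by rewrite ltn_mod; lia.
rewrite !bcirc_blk // !tget_map ?qd0 ?qc0 //.
congr (_ + qj R * qc _).
rewrite negmod //; case: (eqVneq s 0%N) => [->|s0]; first by congr tget; lia.
rewrite -(tget_perN A (p%:Z + s%:Z)); congr tget; lia.
Qed.

Lemma unfold_blk (B : T) s l j : (s < n3)%N -> (l < n)%N -> (j < n)%N ->
  mget (unfold B) (s * n + l) j = tget B s l j.
Proof.
move=> sn ln jn; rewrite (mgetE' _ (blk_lt sn ln) jn) mxE /= blk_div // blk_mod //.
by rewrite tget_nat.
Qed.

Lemma absmod_lt t : (0 < n3)%N -> (`|(t %% n3)%Z| < n3)%N.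
Proof.
move=> n30.
have h1 : (0 <= (t %% n3)%Z) by apply: modz_ge0; lia.
have h2 : ((t %% n3)%Z < n3%:Z) by apply: ltz_pmod; lia.
lia.
Qed.

Lemma absmodE t : (0 < n3)%N -> ((`|(t %% n3)%Z|%N : int) = (t %% n3)%Z).
Proof.
move=> n30; have h1 : (0 <= (t %% n3)%Z) by apply: modz_ge0; lia.
lia.
Qed.

Lemma tget_fold (M : 'M[H]_(n3 * n, n)) t i j : (0 < n3)%N -> (i < n)%N -> (j < n)%N ->
  tget (fold M) t i j = mget M (`|(t %% n3)%Z| * n + i) j.
Proof.
move=> n30 ib jb; have lt := absmod_lt t n30.
by rewrite /tget /sliceN insubT /fold ffunE (mgetE' _ ib jb) mxE.
Qed.


Lemma sum_split (F : nat -> H) a b :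
  \sum_(x < a * b) F x = \sum_(s < a) \sum_(l < b) F (s * b + l)%N.
Proof.
elim: a => [|a IH]; first by rewrite !big_ord0.
rewrite big_ord_recr /= -IH.
have -> : (a.+1 * b = a * b + b)%N by rewrite mulSnr.
by rewrite big_split_ord.
Qed.

Lemma mget_mul m p (X : 'M[H]_(m, n3 * n)) (Y : 'M[H]_(n3 * n, p)) a b :
  (a < m)%N -> (b < p)%N ->
  mget (X *m Y) a b = \sum_(s < n3) \sum_(l < n) mget X a (s * n + l)%N * mget Y (s * n + l)%N b.
Proof.
move=> am bp; pose a' := Ordinal am; pose b' := Ordinal bp.
rewrite -[a]/(nat_of_ord a') -[b]/(nat_of_ord b') mgetE mxE.
rewrite -(sum_split (fun x => mget X a' x * mget Y x b')).
by apply: eq_bigr => x _; rewrite !mgetE.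
Qed.

Lemma tget_qtprod (A B : T) t i j : (0 < n3)%N -> (i < n)%N -> (j < n)%N ->
  tget (qtprod A B) t i j = \sum_(s < n3) \sum_(l < n)
    (qd (tget A (t - s%:Z) i l) + qj R * qc (tget A (t + s%:Z) i l)) * tget B s l j.
Proof.
move=> n30 ib jb; rewrite /qtprod tget_fold // mget_mul ?blk_lt ?absmod_lt //.
apply: eq_bigr => s _; apply: eq_bigr => l _.
rewrite bcircz_blk ?absmod_lt // unfold_blk // absmodE //.
by rewrite !tget_mod.
Qed.



Lemma bcircz_mul (A B : T) : bcircz (qtprod A B) = bcircz A *m bcircz B.
Proof.
apply/matrixP => r c.
have rlt := ltn_ord r; have clt := ltn_ord c.
have : (0 < n3 * n)%N by apply: leq_ltn_trans rlt.
rewrite muln_gt0 => /andP[n30 n0].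
have pn : (r %/ n < n3)%N by rewrite ltn_divLR.
have qn : (c %/ n < n3)%N by rewrite ltn_divLR.
have ib : (r %% n < n)%N by rewrite ltn_mod.
have jb : (c %% n < n)%N by rewrite ltn_mod.
rewrite -[LHS]mgetE -[RHS]mgetE (divn_eq r n) (divn_eq c n).
rewrite bcircz_blk // mget_mul ?blk_lt // !tget_qtprod //.
have pa : forall t l, tget A (t + n3%:Z) (r %% n) l = tget A t (r %% n) l.
  by move=> t l; rewrite tget_per.
have pb : forall t l, tget B (t + n3%:Z) l (c %% n) = tget B t l (c %% n).
  by move=> t l; rewrite tget_per.
rewrite (@circ_alg R n3 n (fun t l => tget A t (r %% n) l) (fun t l => tget B t l (c %% n))
   (r %/ n)%N (c %/ n)%N pa pb).
apply: eq_bigr => s _; apply: eq_bigr => l _.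
by rewrite !bcircz_blk.
Qed.


Lemma absmod_eq0 p q : (p < n3)%N -> (q < n3)%N ->
  (`|((p%:Z - q%:Z) %% n3)%Z| == 0)%N = (p == q).
Proof.
move=> pn qn.
have -> : ((p%:Z - q%:Z) %% n3)%Z = (((p + n3 - q)%N : int) %% n3)%Z.
  rewrite -(modzDr (p%:Z - q%:Z) n3); congr (_ %% _)%Z; lia.
rewrite modz_nat /=.
case: (leqP q p) => h.
  have -> : (p + n3 - q = (p - q) + n3)%N by lia.
  rewrite modnDr modn_small; lia.
rewrite modn_small; lia.
Qed.

Lemma tget_tid t i j : (0 < n3)%N -> (i < n)%N -> (j < n)%N ->
  tget (tid R n n3) t i j = ((`|(t %% n3)%Z| == 0)%N && (i == j))%:R.
Proof.
move=> n30 ib jb; have lt := absmod_lt t n30.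
rewrite /tget /sliceN insubT /tid ffunE /=.
case: eqP => _ /=; last by rewrite /mget; case: (insub i : option 'I_n) => [?|]; case: (insub j : option 'I_n) => [?|]; rewrite ?mxE.
by rewrite (mgetE' _ ib jb) mxE.
Qed.

Lemma blk_eq p q i j : (i < n)%N -> (j < n)%N ->
  (p * n + i == q * n + j)%N = (p == q) && (i == j).
Proof.
move=> ib jb; apply/eqP/andP => [e|[/eqP-> /eqP->] //].
split; apply/eqP.
  by rewrite -(blk_div p ib) e blk_div.
by rewrite -(blk_mod p ib) e blk_mod.
Qed.

Lemma bcircz_tid : bcircz (tid R n n3) = 1%:M.
Proof.
apply/matrixP => r c.
have rlt := ltn_ord r; have clt := ltn_ord c.
have : (0 < n3 * n)%N by apply: leq_ltn_trans rlt.
rewrite muln_gt0 => /andP[n30 n0].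
have pn : (r %/ n < n3)%N by rewrite ltn_divLR.
have qn : (c %/ n < n3)%N by rewrite ltn_divLR.
have ib : (r %% n < n)%N by rewrite ltn_mod.
have jb : (c %% n < n)%N by rewrite ltn_mod.
rewrite [RHS]mxE -val_eqE /= -[LHS]mgetE (divn_eq r n) (divn_eq c n).
rewrite bcircz_blk // !tget_tid // absmod_eq0 // blk_eq //.
have qdn (b : bool) : qd (b%:R : H) = b%:R by case: b.
have qcn (b : bool) : qc (b%:R : H) = 0 by case: b; rewrite /qc /= ?oppr0.
by rewrite qcn mulr0 addr0 qdn.
Qed.

Lemma bcircz_pow (A : T) j : mxpow (bcircz A) j = bcircz (qtpow A j).
Proof.
elim: j => [|j IH] /=; first by rewrite bcircz_tid.
by rewrite IH bcircz_mul.
Qed.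

End Circ.

Theorem lemma3p5 (R : realType) (n n3 k : nat) (A AD : tensor R n n n3) :
  is_IndQT A k -> is_QTDrazin A AD k ->
  is_mxDrazin (bcircz A) (bcircz AD).
Proof.
move=> _ [e1 e2 e3].
apply: (@drazin_from R _ _ _ k).
- by rewrite bcircz_pow -!bcircz_mul e1.
- by rewrite -!bcircz_mul e2.
- by rewrite -!bcircz_mul e3.
Qed.
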